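(* Consider the parametric multistage stochastic optimization problem described in the context, and assume: (A1) the noises $\mathbf{W}_1,\dots,\mathbf{W}_T$ are independent and each has finite support; (A2) (i) the problem is feasible, i.e. $\Phi(p)<+\infty$ for some $p\in\mathcal{P}_{\mathrm{ad}}$; (ii) each dynamics $f_t$ is affine in $(x,u)$; (iii) for all $t\in\{0,\dots,T-1\}$ and all $w\in\mathrm{Supp}(\mathbf{W}_{t+1})$, the function $L_t(\cdot,\cdot,w,\cdot)$ belongs to $\Gamma_{\mathcal{K}}[\mathbb{X}\times\mathbb{U},\mathbb{P}]$; (iv) $K\in\Gamma[\mathbb{X},\mathbb{P}]$. Then the parametric value functions $V_0,\dots,V_T$ are proper and belong to $\Gamma[\mathbb{X},\mathbb{P}]$. Moreover, suppose in addition that, for a given set $\mathcal{P}\subset\mathbb{P}$: (A3) for all $t\in\{0,\dots,T-1\}$ and all $w\in\mathrm{Supp}(\mathbf{W}_{t+1})$, $L_t(\cdot,\cdot,w,\cdot)\in\Theta_{\mathcal{K}}[\mathbb{X}\times\mathbb{U},\mathcal{P}]$, and $K\in\Theta[\mathbb{X},\mathcal{P}]$. Then: (a) the functions $V_0,\dots,V_T$ belong to $\Theta[\mathbb{X},\mathcal{P}]$ and, for all $p\in\mathrm{int}\,\mathcal{P}$, their gradients with respect to $p$ are given by the backward induction $$\nabla_pV_T(x,p)=\nabla_pK(x,p)\quad\forall x\in\mathrm{dom}\,V_T(\cdot,p),$$ and, for every $t\in\{0,\dots,T-1\}$ and all $x\in\mathrm{dom}\,V_t(\cdot,p)$, $$\nabla_pV_t(x,p)=\mathbb{E}\big[\nabla_pL_t(x,u^\star,\mathbf{W}_{t+1},p)+\nabla_pV_{t+1}\big(f_t(x,u^\star,\mathbf{W}_{t+1}),p\big)\big],$$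 where $u^\star$ is any control in the solution set $\mathcal{U}^\star_t(x,p)$; (b) for any closed convex subset $\mathcal{P}_{\mathrm{ad}}\subset\mathcal{P}$, the upstream problem $\min_{p\in\mathcal{P}_{\mathrm{ad}}}\Phi(p)$ is a convex differentiable optimization problem.
   Context: Setting: $T\ge1$ is an integer; $\mathbb{X}=\mathbb{R}^{n_x}$, $\mathbb{U}=\mathbb{R}^{n_u}$, $\mathbb{W}=\mathbb{R}^{n_w}$, $\mathbb{P}=\mathbb{R}^{n_p}$. On a probability space, $\mathbf{W}_1,\dots,\mathbf{W}_T$ are random variables with values in $\mathbb{W}$; $\mathrm{Supp}(\mathbf{W}_t)$ is the set of values taken with positive probability. Given are dynamics $f_t:\mathbb{X}\times\mathbb{U}\times\mathbb{W}\to\mathbb{X}$, stage costs $L_t:\mathbb{X}\times\mathbb{U}\times\mathbb{W}\times\mathbb{P}\to\,]-\infty,+\infty]$ ($t=0,\dots,T-1$), a final cost $K:\mathbb{X}\times\mathbb{P}\to\,]-\infty,+\infty]$, an initial state $x_0\in\mathbb{X}$ and an admissible parameter set $\mathcal{P}_{\mathrm{ad}}\subseteq\mathbb{P}$. For $p\in\mathbb{P}$, $\Phi(p)=\inf\mathbb{E}\big[\sum_{t=0}^{T-1}L_t(\mathbf{X}_t,\mathbf{U}_t,\mathbf{W}_{t+1},p)+K(\mathbf{X}_T,p)\big]$, the infimum being over random controls $\mathbf{U}_t$ measurable with respect to $\sigma(\mathbf{W}_1,\dots,\mathbf{W}_t)$ ($\mathbf{U}_0$ deterministic), with $\mathbf{X}_0=x_0$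 and $\mathbf{X}_{t+1}=f_t(\mathbf{X}_t,\mathbf{U}_t,\mathbf{W}_{t+1})$. The upstream problem is $\min_{p\in\mathcal{P}_{\mathrm{ad}}}\Phi(p)$. The parametric value functions are defined by $V_T(x,p)=K(x,p)$ and $V_t(x,p)=\inf_{u\in\mathbb{U}}Q_t(x,u,p)$, where $Q_t(x,u,p)=\mathbb{E}\big[L_t(x,u,\mathbf{W}_{t+1},p)+V_{t+1}(f_t(x,u,\mathbf{W}_{t+1}),p)\big]$; the solution set is $\mathcal{U}^\star_t(x,p)=\arg\min_{u\in\mathbb{U}}Q_t(x,u,p)$. Under (A1), $\Phi(p)=V_0(x_0,p)$. A function is proper if it never takes the value $-\infty$ and its effective domain $\mathrm{dom}\,g=\{g<+\infty\}$ is nonempty. Function classes: for a Euclidean space $\mathbb{Y}$, $\Gamma[\mathbb{Y},\mathbb{P}]$ is the set of lower semicontinuous convex functions $\mathbb{Y}\times\mathbb{P}\to\,]-\infty,+\infty]$. For $\mathcal{P}\subset\mathbb{P}$, $\Theta[\mathbb{Y},\mathcal{P}]$ is the set of $\theta\in\Gamma[\mathbb{Y},\mathbb{P}]$ with $\mathrm{dom}\,\theta=Y_\theta\times\mathcal{P}$ for some (possibly empty) $Y_\theta\subset\mathbb{Y}$ and such that $\theta(y,\cdot)$ is differentiable on $\mathrm{int}\,\mathcal{P}$ for each $y\in Y_\theta$. $\Gamma_{\mathcal{K}}[\mathbb{X}\times\mathbb{U},\mathbb{P}]$ is the set of $\gamma\in\Gamma[\mathbb{X}\times\mathbb{U},\mathbb{P}]$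 for which some compact $\mathcal{K}_\gamma\subset\mathbb{U}$ satisfies $\mathrm{dom}\,\gamma(x,\cdot,p)\subset\mathcal{K}_\gamma$ for all $(x,p)$; $\Theta_{\mathcal{K}}[\mathbb{X}\times\mathbb{U},\mathcal{P}]=\Theta[\mathbb{X}\times\mathbb{U},\mathcal{P}]\cap\Gamma_{\mathcal{K}}[\mathbb{X}\times\mathbb{U},\mathbb{P}]$. *)

(* Defs.v *)
From HB Require Import structures.
From mathcomp Require Import all_boot all_order all_algebra.
From mathcomp Require Import all_classical all_reals all_analysis.
Set Implicit Arguments. Unset Strict Implicit. Unset Printing Implicit Defensive.
Import Order.TTheory GRing.Theory Num.Theory.
Import numFieldNormedType.Exports.
Local Open Scope classical_set_scope.
Local Open Scope ring_scope.

Section Defs.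
Variable R : realType.

Definition convex_subset (V : lmodType R) (A : set V) : Prop :=
  forall a b (l : R), A a -> A b -> 0 <= l -> l <= 1 ->
    A (l *: a + (1 - l) *: b).

Definition convex_ext (Y P : lmodType R) (theta : Y -> P -> \bar R) : Prop :=
  forall y1 y2 p1 p2 (l : R), 0 < l -> l < 1 ->
    (theta (l *: y1 + (1 - l) *: y2)%R (l *: p1 + (1 - l) *: p2)%R
      <= l%:E * theta y1 p1 + (1 - l)%:E * theta y2 p2)%E.

Definition Gamma_class (Y P : normedModType R) (theta : Y -> P -> \bar R)
  : Prop :=
  (forall y p, theta y p != -oo%E) /\
  lower_semicontinuous (fun z : Y * P => theta z.1 z.2) /\
  convex_ext theta.

Definition Theta_class (Y P : normedModType R) (Pset : set P)
  (theta : Y -> P -> \bar R) : Prop :=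
  Gamma_class theta /\
  exists Ytheta : set Y,
    (forall y p, (theta y p < +oo)%E <-> (Ytheta y /\ Pset p)) /\
    (forall y, Ytheta y -> forall p, interior Pset p ->
        differentiable (fun q => fine (theta y q)) p).

Definition GammaK_class (X U P : normedModType R)
  (gamma : X * U -> P -> \bar R) : Prop :=
  Gamma_class gamma /\
  exists KK : set U, compact KK /\
    (forall x u p, (gamma (x, u) p < +oo)%E -> KK u).

Definition ThetaK_class (X U P : normedModType R) (Pset : set P)
  (gamma : X * U -> P -> \bar R) : Prop :=
  Theta_class Pset gamma /\ GammaK_class gamma.

Definition proper_fun (Y P : Type) (g : Y -> P -> \bar R) : Prop :=
  (forall y p, g y p != -oo%E) /\ exists y p, (g y p < +oo)%E.

Variables (nx nu nw np : nat).
Local Notation X := 'rV[R]_nx.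
Local Notation U := 'rV[R]_nu.
Local Notation W := 'rV[R]_nw.
Local Notation P := 'rV[R]_np.

(* The noise W_t (t = 1..T) has finite support S t (a duplicate-free list of
   the values it takes with positive probability) and law pi t :
   P(W_t = w) = pi t w.  Independence of W_1..W_T means that the joint law is
   the product of these marginals (used in [Phi] below). *)
Definition finite_support_law (S : nat -> seq W) (pi : nat -> W -> R)
  (t : nat) : Prop :=
  uniq (S t) /\ (forall w, w \in S t -> 0 < pi t w) /\
  \sum_(w <- S t) pi t w = 1.

Definition Ew (S : nat -> seq W) (pi : nat -> W -> R) (t : nat)
  (g : W -> \bar R) : \bar R :=
  (\sum_(w <- S t) (pi t w)%:E * g w)%E.

Definition Ew_real (S : nat -> seq W) (pi : nat -> W -> R) (t : nat)
  (g : W -> R) : R :=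
  \sum_(w <- S t) pi t w * g w.

Variables (T : nat) (f : nat -> X -> U -> W -> X)
  (L : nat -> X -> U -> W -> P -> \bar R) (K : X -> P -> \bar R)
  (S : nat -> seq W) (pi : nat -> W -> R).

(* Vaux k = V_(T-k) *)
Fixpoint Vaux (k : nat) : X -> P -> \bar R :=
  match k with
  | 0 => K
  | k'.+1 => fun x p =>
      let t := (T - k'.+1)%N in
      ereal_inf (range (fun u : U =>
        Ew S pi t.+1 (fun w => (L t x u w p + Vaux k' (f t x u w) p)%E)))
  end.

Definition V (t : nat) : X -> P -> \bar R := Vaux (T - t).

Definition Q (t : nat) (x : X) (u : U) (p : P) : \bar R :=
  Ew S pi t.+1 (fun w => (L t x u w p + V t.+1 (f t x u w) p)%E).

Definition Ustar (t : nat) (x : X) (p : P) : set U :=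
  [set u | forall v, (Q t x u p <= Q t x v p)%E].

Fixpoint hists (n : nat) : seq (seq W) :=
  match n with
  | 0 => [:: [::]]
  | n'.+1 => [seq rcons h w | h <- hists n', w <- S n'.+1]
  end.

Definition hprob (h : seq W) : R :=
  \prod_(i < size h) pi i.+1 (nth 0 h i).

(* A non-anticipative policy: U_t = phi t (W_1,...,W_t)
   (a sigma(W_1..W_t)-measurable control, U_0 deterministic). *)
Definition policy := nat -> seq W -> U.

Fixpoint traj (x0 : X) (phi : policy) (h : seq W) (t : nat) : X :=
  match t with
  | 0 => x0
  | t'.+1 => f t' (traj x0 phi h t') (phi t' (take t' h)) (nth 0 h t')
  end.

Definition total_cost (x0 : X) (phi : policy) (p : P) (h : seq W) : \bar R :=
  (\sum_(t < T) L t (traj x0 phi h t) (phi t (take t h)) (nth 0%R h t) p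
    + K (traj x0 phi h T) p)%E.

Definition Jcost (x0 : X) (phi : policy) (p : P) : \bar R :=
  (\sum_(h <- hists T) (hprob h)%:E * total_cost x0 phi p h)%E.

Definition Phi (x0 : X) (p : P) : \bar R :=
  ereal_inf (range (fun phi : policy => Jcost x0 phi p)).

End Defs.

Definition affine_dyn (R : realType) (nx nu nw : nat)
  (ft : 'rV[R]_nx -> 'rV[R]_nu -> 'rV[R]_nw -> 'rV[R]_nx) : Prop :=
  forall w, exists (A : 'M[R]_(nx, nx)) (B : 'M[R]_(nu, nx)) (c : 'rV[R]_nx),
    forall x u, ft x u w = x *m A + u *m B + c.

(* Main.v *)
Require Import Defs.
From HB Require Import structures.
From mathcomp Require Import all_boot all_order all_algebra.
From mathcomp Require Import all_classical all_reals all_analysis.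
From mathcomp Require Import ring lra.
Import Order.TTheory GRing.Theory Num.Theory.
Import numFieldNormedType.Exports.
Local Open Scope classical_set_scope.
Local Open Scope ring_scope.

Local Open Scope ereal_scope.

Section LSC.
Context {R : realType}.

Lemma lsc_cst (T : topologicalType) (c : \bar R) :
  lower_semicontinuous (fun _ : T => c).
Proof. by move=> x a ac; exists setT => //; exact: filterT. Qed.

Lemma lsc_comp (T T' : topologicalType) (k : T' -> T) (g : T -> \bar R) :
  continuous k -> lower_semicontinuous g -> lower_semicontinuous (g \o k).
Proof.
move=> kc gl x a /= ag; have [V nV HV] := gl _ _ ag.
by exists (k @^-1` V); [exact: kc | move=> y; exact: HV].
Qed.

Lemma split_lt (x y : \bar R) (a : R) : x != -oo -> y != -oo ->
  a%:E < x + y -> exists a1 a2, a = (a1 + a2)%R /\ a1%:E < x /\ a2%:E < y.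
Proof.
case: x => [r1| |] //; case: y => [r2| |] // _ _.
- rewrite -EFinD lte_fin => H.
  exists (r1 - (r1 + r2 - a) / 2)%R, (r2 - (r1 + r2 - a) / 2)%R.
  rewrite !lte_fin; split; first lra. split; lra.
- move=> _; exists (r1 - 1)%R, (a - (r1 - 1))%R; rewrite ltry lte_fin.
  split; first lra. split => //; lra.
- move=> _; exists (a - (r2 - 1))%R, (r2 - 1)%R; rewrite ltry lte_fin.
  split; first lra. split => //; lra.
- move=> _; exists a, 0%R; rewrite !ltry; split => //; lra.
Qed.

Lemma lscD (T : topologicalType) (g h : T -> \bar R) :
  (forall x, g x != -oo) -> (forall x, h x != -oo) ->
  lower_semicontinuous g -> lower_semicontinuous h ->
  lower_semicontinuous (fun x => g x + h x).
Proof.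
move=> gN hN gl hl x a /= ax.
have [a1 [a2 [-> [a1g a2h]]]] := split_lt _ _ _ (gN x) (hN x) ax.
have [V1 nV1 H1] := gl _ _ a1g; have [V2 nV2 H2] := hl _ _ a2h.
exists (V1 `&` V2); first exact: filterI.
by move=> y [/H1 ? /H2 ?]; rewrite EFinD lteD.
Qed.

Lemma lscZ (T : topologicalType) (c : R) (g : T -> \bar R) : (0 < c)%R ->
  lower_semicontinuous g -> lower_semicontinuous (fun x => c%:E * g x).
Proof.
move=> c0 gl x a /= ax.
have ag : (a / c)%:E < g x.
  move: ax; case: (g x) => [r| |] //=.
  - by rewrite -EFinM !lte_fin ltr_pdivrMr // mulrC.
  - by rewrite ltry.
  - by rewrite gt0_muleNy // ?lte_fin.
have [V nV HV] := gl _ _ ag; exists V => // y /HV.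
rewrite -(@lte_pmul2l _ c%:E) // ?lte_fin // -EFinM.
by rewrite mulrC divfK // gt_eqF.
Qed.

Lemma sum_neq_ninfty (I : Type) (s : seq I) (F : I -> \bar R) :
  (forall i, F i != -oo) -> \sum_(i <- s) F i != -oo.
Proof.
move=> FN; elim: s => [|i s IH]; first by rewrite big_nil.
by rewrite big_cons; move: (FN i) IH; case: (F i) => [r| |] //; case: (\sum_(i <- s) F i).
Qed.

Lemma lsc_sum (T : topologicalType) (I : eqType) (s : seq I) (G : I -> T -> \bar R) :
  (forall i x, G i x != -oo) -> (forall i, i \in s -> lower_semicontinuous (G i)) ->
  lower_semicontinuous (fun x => \sum_(i <- s) G i x).
Proof.
move=> GN; elim: s => [|i s IH] Gl.
  have -> : (fun x => \sum_(i <- [::]) G i x) = fun _ => 0 by apply: funext => x; rewrite big_nil.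
  exact: lsc_cst.
have -> : (fun x => \sum_(j <- i :: s) G j x) = fun x => G i x + \sum_(j <- s) G j x.
  by apply: funext => x; rewrite big_cons.
apply: lscD => //.
- by move=> x; apply: sum_neq_ninfty.
- by apply: Gl; rewrite mem_head.
- by apply: IH => j js; apply: Gl; rewrite in_cons js orbT.
Qed.

End LSC.

Section Attain.
Context {R : realType}.

Lemma le_of_all_gt (x m : \bar R) :
  (forall a : R, m < a%:E -> x <= a%:E) -> x <= m.
Proof.
case: m => [r| |] H.
- apply/lee_addgt0Pr => e e0; rewrite -EFinD; apply: H.
  by rewrite lte_fin ltrDl.
- by rewrite leey.
- move: H; case: x => [s| |] H //.
  + have := H (s - 1)%R (ltNyr _); rewrite lee_fin => h; exfalso; clear H; lra.
  + by have := H 0%R (ltNyr _).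
Qed.

Lemma lsc_attain (U : topologicalType) (g : U -> \bar R) (KK : set U) (u0 : U) :
  compact KK -> lower_semicontinuous g -> (forall u, ~ KK u -> g u = +oo) ->
  exists u, g u = ereal_inf (range g).
Proof.
move=> cK gl gout.
set m := ereal_inf (range g).
have [mpinf|mfin] := eqVneq m +oo.
  exists u0; apply/eqP; rewrite mpinf -leye_eq -mpinf.
  by apply: ereal_inf_lbound; exists u0.
have mlt : m < +oo by rewrite ltey.
pose D := [set a : R | m < a%:E].
pose B := fun a : R => KK `&` [set u | g u <= a%:E].
have D0 : exists a, D a.
  move: mlt; rewrite /D; case: (m) => [r| |] // _.
  - by exists (r + 1)%R; rewrite /= lte_fin ltrDl.
  - by exists 0%R; rewrite /= ltNyr.
have FF : Filter (filter_from D B).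
  apply: filter_from_filter => // i j Di Dj.
  exists (Order.min i j).
    by rewrite /D; case: (leP i j).
  move=> u [Ku gu]; split; split => //; apply: (le_trans gu);
    rewrite lee_fin ge_min lexx ?orbT //.
have PF : ProperFilter (filter_from D B).
  apply: filter_from_proper => a Da.
  have [_ [u _ <-] gua] := ereal_inf_lt Da.
  exists u; split; last exact: ltW.
  by apply: contrapT => /gout gu; move: gua; rewrite gu.
have FK : filter_from D B KK.
  by have [a Da] := D0; exists a => // u [].
have [u [Ku clu]] := cK _ PF FK.
exists u; apply/eqP; rewrite eq_le; apply/andP; split; last first.
  by apply: ereal_inf_lbound; exists u.
apply: le_of_all_gt => a Da; rewrite leNgt; apply/negP => agu.
have [V nV HV] := gl _ _ agu.
have [v [[_ gva] Vv]] := clu (B a) V (ex_intro2 _ _ a Da (fun x h => h)) nV.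
by move: (HV _ Vv); rewrite ltNge gva.
Qed.

Lemma marginal_lsc (A U : topologicalType) (G : U -> A -> \bar R) (KK : set U) :
  compact KK -> lower_semicontinuous (fun q : U * A => G q.1 q.2) ->
  (forall u a, ~ KK u -> G u a = +oo) ->
  lower_semicontinuous (fun a => ereal_inf (range (fun u => G u a))).
Proof.
move=> cK Gl Gout z a /= az.
set M := ereal_inf _ in az.
have [a' [aa' a'M]] : exists a' : R, (a < a')%R /\ a'%:E < M.
  move: az; case: M => [r| |] //.
  - rewrite lte_fin => ar; exists ((a + r) / 2)%R; rewrite lte_fin; split; lra.
  - by move=> _; exists (a + 1)%R; rewrite ltry; split => //; lra.
have cov : \forall i \near z, KK `<=` (fun u => a'%:E < G u i).
  apply: ((compact_near_coveringP KK).1 cK A (nbhs z) (fun i u => a'%:E < G u i)) => u Ku.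
  have a'G : a'%:E < G u z.
    apply: (lt_le_trans a'M); apply: ereal_inf_lbound; by exists u.
  have [V nV HV] := Gl (u, z) _ a'G.
  by apply: filterS nV => q /HV.
exists (fun i => KK `<=` (fun u => a'%:E < G u i)) => // i HV.
apply: (lt_le_trans _ (_ : a'%:E <= _)); first by rewrite lte_fin.
apply: le_ereal_inf_tmp => _ [u _ <-].
have [Ku|nKu] := pselect (KK u).
  exact: ltW (HV u Ku).
by rewrite Gout // leey.
Qed.

End Attain.

Section Esum.
Context {R : realType}.

Lemma sum_neq_ninfty_seq (I : eqType) (s : seq I) (F : I -> \bar R) :
  (forall i, i \in s -> F i != -oo) -> \sum_(i <- s) F i != -oo.
Proof.
move=> FN; rewrite big_seq; apply: (big_ind (fun x : \bar R => x != -oo)) => //.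
by move=> x y; case: x => [r| |] //; case: y.
Qed.

Lemma lsc_sum_seq (T : topologicalType) (I : eqType) (s : seq I) (G : I -> T -> \bar R) :
  (forall i, i \in s -> forall x, G i x != -oo) ->
  (forall i, i \in s -> lower_semicontinuous (G i)) ->
  lower_semicontinuous (fun x => \sum_(i <- s) G i x).
Proof.
elim: s => [|i s IH] GN Gl.
  have -> : (fun x => \sum_(i <- [::]) G i x) = fun _ => 0 by apply: funext => x; rewrite big_nil.
  exact: lsc_cst.
have -> : (fun x => \sum_(j <- i :: s) G j x) = fun x => G i x + \sum_(j <- s) G j x.
  by apply: funext => x; rewrite big_cons.
apply: lscD => //.
- by apply: GN; rewrite mem_head.
- by move=> x; apply: sum_neq_ninfty_seq => j js; apply: GN; rewrite in_cons js orbT.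
- by apply: Gl; rewrite mem_head.
- by apply: IH => j js; [apply: GN | apply: Gl]; rewrite in_cons js orbT.
Qed.

Lemma mulc_neq_ninfty (a : R) (x : \bar R) : (0 < a)%R -> x != -oo -> a%:E * x != -oo.
Proof.
move=> ci; case: x => [r| |] // _.
by rewrite gt0_muley // lte_fin.
Qed.

Lemma mulc_lt_pinfty (a : R) (x : \bar R) : (0 < a)%R -> (a%:E * x < +oo) = (x < +oo).
Proof.
move=> ci; case: x => [r| |] //=; first by rewrite -EFinM !ltry.
- by rewrite gt0_muley ?lte_fin.
- by rewrite gt0_muleNy ?lte_fin.
Qed.

Lemma Esum_neq_ninfty (I : eqType) (s : seq I) (c : I -> R) (g : I -> \bar R) :
  (forall i, i \in s -> (0 < c i)%R) ->
  (forall i, i \in s -> g i != -oo) -> \sum_(i <- s) (c i)%:E * g i != -oo.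
Proof.
move=> cp gN; apply: sum_neq_ninfty_seq => i is_.
by apply: mulc_neq_ninfty; [apply: cp | apply: gN].
Qed.

Lemma addlt_pinfty (a b : \bar R) : a != -oo -> b != -oo ->
  (a + b < +oo) <-> (a < +oo /\ b < +oo).
Proof. by case: a => [r| |] //; case: b => [q| |] //= _ _; rewrite ?ltry; split => // -[]. Qed.

Lemma Esum_lt_pinfty (I : eqType) (s : seq I) (c : I -> R) (g : I -> \bar R) :
  (forall i, i \in s -> (0 < c i)%R) ->
  (forall i, i \in s -> g i != -oo) ->
  (\sum_(i <- s) (c i)%:E * g i < +oo) <-> (forall i, i \in s -> g i < +oo).
Proof.
elim: s => [|j s' IH] cp gN.
  by rewrite big_nil; split => // _ i; rewrite in_nil.
have cp' : forall i, i \in s' -> (0 < c i)%R by move=> i is_; apply: cp; rewrite in_cons is_ orbT.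
have gN' : forall i, i \in s' -> g i != -oo by move=> i is_; apply: gN; rewrite in_cons is_ orbT.
rewrite big_cons addlt_pinfty; first last.
- exact: Esum_neq_ninfty.
- by apply: mulc_neq_ninfty; [apply: cp | apply: gN]; rewrite mem_head.
rewrite mulc_lt_pinfty; last by apply: cp; rewrite mem_head.
rewrite IH //; split.
- by move=> [gj H] i; rewrite in_cons => /orP [/eqP -> // | /H].
- move=> H; split; first by apply: H; rewrite mem_head.
  by move=> i is_; apply: H; rewrite in_cons is_ orbT.
Qed.

Lemma Esum_le (I : eqType) (s : seq I) (c : I -> R) (g1 g2 : I -> \bar R) :
  (forall i, i \in s -> (0 < c i)%R) ->
  (forall i, i \in s -> g1 i <= g2 i) ->
  \sum_(i <- s) (c i)%:E * g1 i <= \sum_(i <- s) (c i)%:E * g2 i.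
Proof.
move=> cp gle; rewrite big_seq [X in _ <= X]big_seq; apply: lee_sum => i is_.
by rewrite lee_pmul2l // ?lte_fin ?cp // gle.
Qed.

Lemma adde_def_ninfty (a b : \bar R) : a != -oo -> b != -oo -> a +? b.
Proof. by case: a => [r| |] //; case: b. Qed.

Lemma mulE_sum (I : eqType) (s : seq I) (x : R) (F : I -> \bar R) :
  (forall i, i \in s -> F i != -oo) ->
  x%:E * \sum_(i <- s) F i = \sum_(i <- s) x%:E * F i.
Proof.
elim: s => [|j s' IH] FN; first by rewrite !big_nil mule0.
rewrite !big_cons muleDr //; last first.
  apply: adde_def_ninfty; first by apply: FN; rewrite mem_head.
  by apply: sum_neq_ninfty_seq => i is_; apply: FN; rewrite in_cons is_ orbT.
by rewrite IH // => i is_; apply: FN; rewrite in_cons is_ orbT.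
Qed.

Lemma Esum_convex (I : eqType) (s : seq I) (c : I -> R) (g a b : I -> \bar R) (l : R) :
  (forall i, i \in s -> (0 < c i)%R) -> (0 < l)%R -> (l < 1)%R ->
  (forall i, i \in s -> a i != -oo) -> (forall i, i \in s -> b i != -oo) ->
  (forall i, i \in s -> g i <= l%:E * a i + (1 - l)%:E * b i) ->
  \sum_(i <- s) (c i)%:E * g i <=
    l%:E * \sum_(i <- s) (c i)%:E * a i + (1 - l)%:E * \sum_(i <- s) (c i)%:E * b i.
Proof.
move=> cp l0 l1 aN bN gle.
have l1' : (0 < 1 - l)%R by rewrite subr_gt0.
have := @Esum_le _ s c g (fun i => (l%:E * a i + (1 - l)%:E * b i)%E) cp gle.
move/le_trans; apply.
rewrite !mulE_sum; try by move=> i is_; apply: mulc_neq_ninfty; [apply: cp | first [exact: aN | exact: bN]].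
rewrite -big_split /= big_seq [X in _ <= X]big_seq; apply: lee_sum => i is_.
rewrite muleDr //; last first.
  by apply: adde_def_ninfty; apply: mulc_neq_ninfty => //; [apply: aN | apply: bN].
by rewrite !muleA -!EFinM (mulrC (c i)) (mulrC (c i)).
Qed.

Lemma Esum_fin (I : eqType) (s : seq I) (c : I -> R) (g : I -> \bar R) :
  (forall i, i \in s -> g i \is a fin_num) ->
  \sum_(i <- s) (c i)%:E * g i = (\sum_(i <- s) c i * fine (g i))%:E.
Proof.
move=> gf; rewrite -sumEFin big_seq [X in _ = X]big_seq; apply: eq_bigr => i is_.
by rewrite EFinM fineK // gf.
Qed.

Lemma Esum_lsc (T : topologicalType) (I : eqType) (s : seq I) (c : I -> R)
    (G : I -> T -> \bar R) :
  (forall i, i \in s -> (0 < c i)%R) ->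
  (forall i, i \in s -> forall x, G i x != -oo) ->
  (forall i, i \in s -> lower_semicontinuous (G i)) ->
  lower_semicontinuous (fun x => \sum_(i <- s) (c i)%:E * G i x).
Proof.
move=> cp GN Gl; apply: (@lsc_sum_seq T I s (fun i x => (c i)%:E * G i x)).
- by move=> i is_ x; apply: mulc_neq_ninfty; [apply: cp | apply: GN].
- by move=> i is_; apply: lscZ; [apply: cp | apply: Gl].
Qed.

End Esum.

Local Close Scope ereal_scope.
Local Open Scope ring_scope.

Section Squeeze.
Context {R : realType} {V : normedModType R}.

Lemma nbhs0_opp (P : V -> Prop) : (\forall v \near (0 : V), P v) -> \forall v \near (0 : V), P (- v).
Proof.
move=> HP.
have h : (fun v : V => - v) @ (0 : V) --> (0 : V).
  have := @oppr_continuous R V 0. by rewrite /continuous_at oppr0.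
exact: h.
Qed.

Lemma squeeze_aux {Hpv Hmv Hp gpv gmv gp D e : R} : gp = Hp ->
  `|Hpv - (Hp + D)| <= e/2 -> `|Hmv - (Hp - D)| <= e/2 -> gpv <= Hpv -> gmv <= Hmv ->
  2 * gp <= gpv + gmv -> - e <= gpv - (gp + D) <= e.
Proof.
rewrite !ler_norml => -> /andP[a1 a2] /andP[b1 b2] h1 h2 h3.
apply/andP; split; lra.
Qed.

Lemma squeeze_diff (g H : V -> R) (p : V) (N : set V) :
  nbhs p N -> differentiable H p ->
  (forall q, N q -> g q <= H q) -> g p = H p ->
  (forall v, N (p + v) -> N (p - v) -> 2 * g p <= g (p + v) + g (p - v)) ->
  differentiable g p /\ 'd g p = 'd H p :> (V -> R).
Proof.
move=> Np Hd gH gpHp gconv.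
have Dc : continuous ('d H p) := diff_continuous Hd.
have oH := diff_locally Hd.
move/eqaddoP: oH => oH.
have key : g \o shift p = cst (g p) + 'd H p +o_ (0 : V) id.
  apply/eqaddoP => eps eps0.
  have e2 : 0 < eps / 2 by rewrite divr_gt0.
  have A := oH _ e2.
  have B := nbhs0_opp _ A.
  have C1 := (nbhs0P N p).1 Np.
  have C2 := nbhs0_opp _ C1.
  near=> v.
  have a : `|H (v + p) - (H p + 'd H p v)| <= eps / 2 * `|v| by apply: (near A v).
  have b : `|H (- v + p) - (H p + 'd H p (- v))| <= eps / 2 * `|- v| by apply: (near B v).
  have c1 : N (p + v) by apply: (near C1 v).
  have c2 : N (p - v) by apply: (near C2 v).
  rewrite linearN /= normrN in b.
  have ga := gH _ c1; have gb := gH _ c2; have gc := gconv _ c1 c2.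
  rewrite /= ler_norml.
  have na := ler_norm (H (v + p) - (H p + 'd H p v)).
  have nb := ler_norm (H (- v + p) - (H p + - 'd H p v)).
  change (- (eps * `|v|) <= g (v + p) - (g p + 'd H p v) <= eps * `|v|).
  have E1 : v + p = p + v := addrC _ _.
  have E2 : - v + p = p - v := addrC _ _.
  rewrite E1 in a na *; rewrite E2 in b nb.
  set D := 'd H p v in na nb a b *.
  set e := eps * `|v|.
  have ee : eps / 2 * `|v| = e / 2 by rewrite /e mulrAC.
  rewrite ee in a b.
  exact: (squeeze_aux gpHp a b ga gb gc).
have dg : 'd g p = 'd H p :> (V -> R) := diff_unique Dc key.
split => //; apply/diff_locallyP; rewrite dg; split => //.
Unshelve. all: by end_near. Qed.

Lemma diff_sum_seq (I : eqType) (s : seq I) (c : I -> R) (F : I -> V -> R) (p : V) :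
  (forall i, i \in s -> differentiable (F i) p) ->
  differentiable (fun q => \sum_(i <- s) c i * F i q) p /\
  forall h, 'd (fun q => \sum_(i <- s) c i * F i q) p h = \sum_(i <- s) c i * 'd (F i) p h.
Proof.
elim: s => [|j s IH] Fd.
  have -> : (fun q => \sum_(i <- [::]) c i * F i q) = cst 0.
    by apply: funext => q; rewrite big_nil.
  split; first exact: differentiable_cst.
  by move=> h; rewrite diff_cst big_nil.
have [dr dre] : differentiable (fun q => \sum_(i <- s) c i * F i q) p /\
  forall h, 'd (fun q => \sum_(i <- s) c i * F i q) p h = \sum_(i <- s) c i * 'd (F i) p h.
  by apply: IH => i is_; apply: Fd; rewrite in_cons is_ orbT.
have dj : differentiable (F j) p by apply: Fd; rewrite mem_head.
have -> : (fun q => \sum_(i <- j :: s) c i * F i q) =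
    (c j *: F j) + (fun q => \sum_(i <- s) c i * F i q).
  by apply: funext => q; rewrite big_cons.
split; first by apply: differentiableD => //; apply: differentiableZ.
move=> h; rewrite diffD //; last exact: differentiableZ.
by rewrite diffZ //= dre big_cons.
Qed.

End Squeeze.

Local Open Scope ring_scope.

Section Cont.
Context {R : realType}.

Lemma mx_continuous (Y : topologicalType) m n (g : Y -> 'M[R]_(m,n)) :
  (forall i j, continuous (fun y => g y i j)) -> continuous g.
Proof.
move=> gc y A [P PM PA].
have : \forall z \near y, forall i j, P i j (g z i j).
  apply: filter_forall => i; apply: filter_forall => j.
  exact: gc i j y _ (PM i j).
by apply: filterS => z Hz; apply: PA.
Qed.

Lemma cont_sum (Y : topologicalType) n (F : 'I_n -> Y -> R) :
  (forall k, continuous (F k)) -> continuous (fun y => \sum_(k < n) F k y).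
Proof.
elim: n F => [|n IH] F Fc.
  have -> : (fun y => \sum_(k < 0) F k y) = fun=> 0 by apply: funext => y; rewrite big_ord0.
  exact: cst_continuous.
have -> : (fun y => \sum_(k < n.+1) F k y) =
    (F ord0) + (fun y => \sum_(k < n) F (lift ord0 k) y).
  by apply: funext => y; rewrite big_ord_recl.
move=> y; apply: continuousD; first exact: Fc.
by apply: IH => k; apply: Fc.
Qed.

Lemma mulmx_continuous m n (A : 'M[R]_(m, n)) : continuous (fun x : 'rV[R]_m => x *m A).
Proof.
apply: mx_continuous => i j.
have -> : (fun y : 'rV[R]_m => (y *m A) i j) = fun y => \sum_(k < m) y i k * A k j.
  by apply: funext => y; rewrite mxE.
apply: cont_sum => k y.
apply: (@continuousM _ _ (fun y : 'rV[R]_m => y i k) (fun=> A k j)).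
  exact: coord_continuous.
exact: cst_continuous.
Qed.

Lemma fst_cont (A B : topologicalType) : continuous (fun q : A * B => q.1).
Proof. by move=> q; apply: cvg_fst. Qed.

Lemma snd_cont (A B : topologicalType) : continuous (fun q : A * B => q.2).
Proof. by move=> q; apply: cvg_snd. Qed.

Lemma pair_cont (Y A B : topologicalType) (g : Y -> A) (h : Y -> B) :
  continuous g -> continuous h -> continuous (fun y => (g y, h y)).
Proof. by move=> gc hc y; apply: cvg_pair; [exact: gc | exact: hc]. Qed.

Lemma comp_cont (A B C : topologicalType) (g : A -> B) (h : B -> C) :
  continuous g -> continuous h -> continuous (fun y => h (g y)).
Proof. by move=> gc hc y; apply: continuous_comp; [exact: gc | exact: hc]. Qed.

End Cont.

Local Open Scope ereal_scope.

Section ThetaGen.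
Context {R : realType} {Y P : normedModType R}.

Lemma Theta_dom (Pset : set P) (theta : Y -> P -> \bar R) : Theta_class Pset theta ->
  forall y p, theta y p < +oo -> Pset p /\ forall q, Pset q -> theta y q < +oo.
Proof.
move=> [_ [Yt [Hd _]]] y p /Hd [Yy Pp]; split => // q Pq.
by apply/Hd.
Qed.

Lemma Theta_diff (Pset : set P) (theta : Y -> P -> \bar R) : Theta_class Pset theta ->
  forall y p q, theta y p < +oo -> interior Pset q ->
  differentiable (fun r => fine (theta y r)) q.
Proof.
move=> [_ [Yt [Hd Hdf]]] y p q /Hd [Yy Pp] iq.
exact: Hdf.
Qed.

Lemma Theta_of (Pset : set P) (theta : Y -> P -> \bar R) : Gamma_class theta ->
  (forall y p, theta y p < +oo -> Pset p /\ forall q, Pset q -> theta y q < +oo) ->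
  (forall y p q, theta y p < +oo -> interior Pset q ->
     differentiable (fun r => fine (theta y r)) q) ->
  Theta_class Pset theta.
Proof.
move=> G Hd Hdf; split => //.
exists (fun y => exists p, theta y p < +oo); split.
- move=> y p; split.
    by move=> yp; split; [exists p | exact: (Hd _ _ yp).1].
  by move=> [[p' yp'] Pp]; apply: (Hd _ _ yp').2.
- by move=> y [p' yp'] q iq; apply: Hdf yp' iq.
Qed.

End ThetaGen.

Lemma mid_aux {R : realType} {a b c : R} :
  (a <= 1 / 2 * b + (1 - 1 / 2) * c)%R -> (2 * a <= b + c)%R.
Proof. move=> h; lra. Qed.

Section Main.
Variables (R : realType) (nx nu nw np T : nat)
  (f : nat -> 'rV[R]_nx -> 'rV[R]_nu -> 'rV[R]_nw -> 'rV[R]_nx)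
  (L : nat -> 'rV[R]_nx -> 'rV[R]_nu -> 'rV[R]_nw -> 'rV[R]_np -> \bar R)
  (K : 'rV[R]_nx -> 'rV[R]_np -> \bar R)
  (S : nat -> seq 'rV[R]_nw) (pi : nat -> 'rV[R]_nw -> R).
Hypothesis HL : forall t x u w p, L t x u w p != -oo.
Hypothesis HK : forall x p, K x p != -oo.
Hypothesis HS : forall t, (1 <= t <= T)%N -> finite_support_law S pi t.
Hypothesis Hf : forall t, (t < T)%N -> affine_dyn (f t).
Hypothesis HLG : forall t w, (t < T)%N -> w \in S t.+1 ->
     GammaK_class (fun z p => L t z.1 z.2 w p).
Hypothesis HKG : Gamma_class K.

Local Notation X := 'rV[R]_nx.
Local Notation U := 'rV[R]_nu.
Local Notation W := 'rV[R]_nw.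
Local Notation P := 'rV[R]_np.
Local Notation Vf := (V T f L K S pi).
Local Notation Qf := (Q T f L K S pi).

Lemma VT : Vf T = K.
Proof. by rewrite /V subnn. Qed.

Lemma VE t : (t < T)%N -> Vf t = fun x p => ereal_inf (range (fun u => Qf t x u p)).
Proof.
move=> tT; rewrite /V /Q /V.
have -> : (T - t = (T - t.+1).+1)%N by rewrite subnSK.
have E : (T - (T - t.+1).+1 = t)%N by rewrite subnSK // subKn // ltnW.
by rewrite /= E.
Qed.

Lemma Spos t : (t < T)%N -> forall w, w \in S t.+1 -> (0 < pi t.+1 w)%R.
Proof. by move=> tT; have [_ [H _]] := HS t.+1 tT. Qed.

Lemma Sne t : (t < T)%N -> exists w, w \in S t.+1.
Proof.
move=> tT; have [_ [_ H]] := HS t.+1 tT.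
move: H; case: (S t.+1) => [|w s]; first by rewrite big_nil => /eqP; rewrite eq_sym oner_eq0.
by move=> _; exists w; rewrite mem_head.
Qed.


Lemma addf_cont (Y : topologicalType) (Z : normedModType R) (g h : Y -> Z) :
  continuous g -> continuous h -> continuous (fun y => g y + h y)%R.
Proof. by move=> gc hc y; apply: continuousD; [exact: gc | exact: hc]. Qed.

Lemma addeN_ninfty (a b : \bar R) : a != -oo -> b != -oo -> a + b != -oo.
Proof. by case: a => [r| |] //; case: b. Qed.

Lemma QN t x u p : (t < T)%N -> (forall y q, Vf t.+1 y q != -oo) -> Qf t x u p != -oo.
Proof.
move=> tT VN; apply: Esum_neq_ninfty; first exact: Spos t tT.
by move=> w _; apply: addeN_ninfty.
Qed.

Lemma Qlt t x u p : (t < T)%N -> (forall y q, Vf t.+1 y q != -oo) ->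
  (Qf t x u p < +oo <-> forall w, w \in S t.+1 ->
     L t x u w p < +oo /\ Vf t.+1 (f t x u w) p < +oo).
Proof.
move=> tT VN; rewrite /Q /Ew Esum_lt_pinfty; first last.
- by move=> w _; apply: addeN_ninfty.
- exact: Spos t tT.
split => H w ws; have [h1 h2] := addlt_pinfty _ _ (HL t x u w p) (VN (f t x u w) p).
- exact: h1 (H w ws).
- exact: h2 (H w ws).
Qed.

Lemma Qout t : (t < T)%N -> (forall y q, Vf t.+1 y q != -oo) ->
  exists KK : set U, compact KK /\ forall x u p, ~ KK u -> Qf t x u p = +oo.
Proof.
move=> tT VN; have [w0 w0S] := Sne t tT.
have [_ [KK [cK HK']]] := HLG t w0 tT w0S.
exists KK; split => // x u p nK.
apply/eqP; rewrite eq_le leey /= leNgt; apply/negP => /(Qlt t x u p tT VN) /(_ _ w0S) [Llt _].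
exact: nK (HK' x u p Llt).
Qed.

Lemma f_cont t w : (t < T)%N -> continuous (fun q : U * (X * P) => f t q.2.1 q.1 w).
Proof.
move=> tT; have [A [B [c Hc]]] := Hf t tT w.
have -> : (fun q : U * (X * P) => f t q.2.1 q.1 w) =
   (fun q => q.2.1 *m A + q.1 *m B + c)%R by apply: funext => q; rewrite Hc.
apply: addf_cont; last exact: cst_continuous.
apply: addf_cont.
- apply: (@comp_cont _ _ _ (fun q : U * (X * P) => q.2.1) (fun x => x *m A)%R); last exact: mulmx_continuous.
  exact: (comp_cont _ _ _ _ _ (snd_cont _ _) (fst_cont _ _)).
- apply: (@comp_cont _ _ _ (fun q : U * (X * P) => q.1) (fun x => x *m B)%R); last exact: mulmx_continuous.
  exact: fst_cont.
Qed.

Lemma f_affine t w x1 x2 u1 u2 (l : R) : (t < T)%N ->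
  f t (l *: x1 + (1 - l) *: x2)%R (l *: u1 + (1 - l) *: u2)%R w =
  (l *: f t x1 u1 w + (1 - l) *: f t x2 u2 w)%R.
Proof.
move=> tT; have [A [B [c Hc]]] := Hf t tT w.
rewrite !Hc !mulmxDl -!scalemxAl.
set a1 := x1 *m A; set a2 := x2 *m A; set b1 := u1 *m B; set b2 := u2 *m B.
apply/rowP => j; rewrite !mxE; ring.
Qed.

Lemma Qlsc t : (t < T)%N -> Gamma_class (Vf t.+1) ->
  lower_semicontinuous (fun q : U * (X * P) => Qf t q.2.1 q.1 q.2.2).
Proof.
move=> tT [VN [Vl _]].
apply: Esum_lsc; first exact: Spos t tT.
  by move=> w _ q; apply: addeN_ninfty.
move=> w ws.
have [[_ [Ll _]] _] := HLG t w tT ws.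
apply: (@lscD _ _ (fun q : U * (X * P) => L t q.2.1 q.1 w q.2.2)
    (fun q => Vf t.+1 (f t q.2.1 q.1 w) q.2.2)) => //.
- apply: (@lsc_comp _ _ _ (fun q : U * (X * P) => ((q.2.1, q.1), q.2.2)) _ _ Ll).
  apply: pair_cont; last exact: (comp_cont _ _ _ _ _ (snd_cont _ _) (snd_cont _ _)).
  apply: pair_cont; last exact: fst_cont.
  exact: (comp_cont _ _ _ _ _ (snd_cont _ _) (fst_cont _ _)).
- apply: (@lsc_comp _ _ _ (fun q : U * (X * P) => (f t q.2.1 q.1 w, q.2.2)) _ _ Vl).
  apply: pair_cont; first exact: f_cont.
  exact: (comp_cont _ _ _ _ _ (snd_cont _ _) (snd_cont _ _)).
Qed.


Lemma comb_add (l : R) (a1 a2 b1 b2 : \bar R) :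
  a1 != -oo -> a2 != -oo -> b1 != -oo -> b2 != -oo ->
  l%:E * (a1 + b1) + (1 - l)%:E * (a2 + b2) =
  (l%:E * a1 + (1 - l)%:E * a2) + (l%:E * b1 + (1 - l)%:E * b2).
Proof.
move=> a1N a2N b1N b2N.
rewrite muleDr // ?adde_def_ninfty // muleDr // ?adde_def_ninfty //.
by rewrite addeACA.
Qed.

Lemma Qconv t : (t < T)%N -> Gamma_class (Vf t.+1) ->
  forall x1 x2 u1 u2 p1 p2 (l : R), (0 < l)%R -> (l < 1)%R ->
  Qf t (l *: x1 + (1 - l) *: x2)%R (l *: u1 + (1 - l) *: u2)%R (l *: p1 + (1 - l) *: p2)%R
  <= l%:E * Qf t x1 u1 p1 + (1 - l)%:E * Qf t x2 u2 p2.
Proof.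
move=> tT [VN [_ Vc]] x1 x2 u1 u2 p1 p2 l l0 l1.
rewrite /Q /Ew; apply: Esum_convex => //; first exact: Spos t tT.
- by move=> w _; apply: addeN_ninfty.
- by move=> w _; apply: addeN_ninfty.
move=> w ws; rewrite comb_add //.
apply: leeD.
- have [[_ [_ Lc]] _] := HLG t w tT ws.
  exact: (Lc (x1, u1) (x2, u2) p1 p2 l l0 l1).
- rewrite f_affine //; exact: Vc.
Qed.

Lemma Gamma_step t : (t < T)%N -> Gamma_class (Vf t.+1) ->
  Gamma_class (Vf t) /\ (forall x p, exists u, Vf t x p = Qf t x u p).
Proof.
move=> tT GV; have VN := GV.1.
have [KK [cK Hout]] := Qout t tT VN.
have Ql := Qlsc t tT GV.
have amin : forall x p, exists u, Vf t x p = Qf t x u p.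
  move=> x p; rewrite VE //.
  have [|u Hu] := lsc_attain _ (fun u => Qf t x u p) KK 0%R cK _ (fun u nK => Hout x u p nK).
    apply: (@lsc_comp _ _ _ (fun u : U => (u, (x, p))) _ _ Ql).
    apply: pair_cont; [by move=> ?; exact: cvg_id | exact: cst_continuous].
  by exists u; rewrite Hu.
split => //; split; [|split].
- by move=> y p; have [u ->] := amin y p; exact: QN.
- have -> : (fun z : X * P => Vf t z.1 z.2) =
      fun z => ereal_inf (range (fun u => Qf t z.1 u z.2)) by rewrite VE.
  apply: (marginal_lsc _ _ (fun u z => Qf t z.1 u z.2) KK cK Ql).
  by move=> u z nK; apply: Hout.
- move=> y1 y2 p1 p2 l l0 l1.
  have [u1 ->] := amin y1 p1; have [u2 ->] := amin y2 p2.
  rewrite VE //; apply: le_trans (Qconv t tT GV y1 y2 u1 u2 p1 p2 l l0 l1).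
  by apply: ereal_inf_lbound; exists (l *: u1 + (1 - l) *: u2)%R.
Qed.

Lemma Gamma_all t : (t <= T)%N -> Gamma_class (Vf t).
Proof.
move=> tT; rewrite -(subKn tT).
elim: (T - t)%N (leq_subr t T) => [|k IH] kT.
  by rewrite subn0 VT.
have kT' : (T - k.+1 < T)%N by rewrite ltn_subrL; apply/andP; split => //; apply: leq_ltn_trans kT.
have GV : Gamma_class (Vf (T - k.+1).+1) by rewrite subnSK //; apply: IH; apply: ltnW.
exact: (Gamma_step _ kT' GV).1.
Qed.

Lemma argmin t : (t < T)%N -> forall x p, exists u, Vf t x p = Qf t x u p.
Proof. by move=> tT; apply: (Gamma_step t tT (Gamma_all t.+1 tT)).2. Qed.

Lemma VN_all t : (t <= T)%N -> forall x p, Vf t x p != -oo.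
Proof. by move=> tT; have [] := Gamma_all t tT. Qed.


Lemma size_hists n h : h \in hists S n -> size h = n.
Proof.
elim: n h => [|n IH] h /=; first by rewrite inE => /eqP ->.
by move=> /allpairsP [[g w] [/= /IH <- _ ->]]; rewrite size_rcons.
Qed.

Lemma sum_hists_S (F : seq W -> \bar R) n :
  \sum_(g <- hists S n.+1) F g = \sum_(h <- hists S n) \sum_(w <- S n.+1) F (rcons h w).
Proof. by rewrite /= big_allpairs_dep. Qed.

Lemma Alg (s : seq W) (c : W -> R) (x : R) (A : \bar R) (B C : W -> \bar R) :
  (forall w, w \in s -> (0 < c w)%R) -> (\sum_(w <- s) c w = 1)%R ->
  A != -oo -> (forall w, B w != -oo) -> (forall w, C w != -oo) ->
  x%:E * (A + \sum_(w <- s) (c w)%:E * (B w + C w)) =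
  \sum_(w <- s) (x * c w)%:E * ((A + B w) + C w).
Proof.
move=> cp c1 AN BN CN.
have Aeq : A = \sum_(w <- s) (c w)%:E * A.
  rewrite big_seq -ge0_sume_distrl; last by move=> w ws; rewrite lee_fin ltW // cp.
  by rewrite -big_seq sumEFin c1 mul1e.
rewrite {1}Aeq -big_split /= mulE_sum; last first.
  move=> w ws; apply: addeN_ninfty; apply: mulc_neq_ninfty; try exact: cp.
  - exact: AN.
  - exact: addeN_ninfty.
rewrite big_seq [RHS]big_seq; apply: eq_bigr => w ws.
rewrite -muleDr // ?adde_def_ninfty //; last exact: addeN_ninfty.
by rewrite muleA -EFinM addeA.
Qed.

Lemma sum_neq_ninfty' (I : Type) (s : seq I) (F : I -> \bar R) :
  (forall i, F i != -oo) -> \sum_(i <- s) F i != -oo.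
Proof. exact: sum_neq_ninfty. Qed.

Section Traj.
Variables (x0 : X) (phi : policy R nu nw).
Local Notation tr := (traj f x0 phi).

Lemma traj_take h n m : (m <= n)%N -> tr (take n h) m = tr h m.
Proof.
elim: m => [|m IH] mn //=.
rewrite IH ?(ltnW mn) // take_takel ?(ltnW mn) //.
by rewrite nth_take.
Qed.

Lemma traj_rcons h w m : (m <= size h)%N -> tr (rcons h w) m = tr h m.
Proof.
move=> mh; rewrite -(traj_take (rcons h w) (size h) m mh).
by rewrite -cats1 take_size_cat.
Qed.

Lemma traj_rcons_succ h w :
  tr (rcons h w) (size h).+1 = f (size h) (tr h (size h)) (phi (size h) h) w.
Proof.
rewrite /= traj_rcons // -cats1 take_size_cat // cats1 nth_rcons ltnn eqxx.
by [].
Qed.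

Lemma hprob_rcons h w : hprob pi (rcons h w) = (hprob pi h * pi (size h).+1 w)%R.
Proof.
rewrite /hprob size_rcons big_ord_recr /= nth_rcons ltnn eqxx; congr (_ * _)%R.
by apply: eq_bigr => i _; rewrite nth_rcons ltn_ord.
Qed.

Variable p : P.

Fixpoint Jaux (k : nat) (h : seq W) {struct k} : \bar R :=
  match k with
  | 0 => K (tr h T) p
  | k'.+1 => Ew S pi (T - k'.+1)%N.+1 (fun w =>
      L (T - k'.+1)%N (tr h (T - k'.+1)%N) (phi (T - k'.+1)%N (take (T - k'.+1)%N h)) w p
      + Jaux k' (rcons h w))
  end.

Lemma JauxN k h : (k <= T)%N -> Jaux k h != -oo.
Proof.
elim: k h => [|k IH] h kT /=; first exact: HK.
have tT : (T - k.+1 < T)%N by rewrite ltn_subrL; apply/andP; split => //; apply: leq_ltn_trans kT.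
apply: Esum_neq_ninfty; first exact: Spos _ tT.
by move=> w _; apply: addeN_ninfty => //; apply: IH; apply: ltnW.
Qed.


Definition Gsum n := \sum_(h <- hists S n) (hprob pi h)%:E *
  ((\sum_(t < n) L t (tr h t) (phi t (take t h)) (nth 0%R h t) p) + Jaux (T - n)%N h).

Lemma Gsum_T : Gsum T = Jcost T f L K S pi x0 phi p.
Proof. by rewrite /Gsum subnn. Qed.

Lemma Gsum_0 : Gsum 0 = Jaux T [::].
Proof.
by rewrite /Gsum /= big_cons big_nil big_ord0 /hprob /= big_ord0 subn0 add0e mul1e adde0.
Qed.

Lemma Gsum_S n : (n < T)%N -> Gsum n.+1 = Gsum n.
Proof.
move=> nT; rewrite /Gsum sum_hists_S big_seq [RHS]big_seq; apply: eq_bigr => h hh.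
have sh := size_hists n h hh.
have E : (T - n = (T - n.+1).+1)%N by rewrite subnSK.
rewrite E /= (_ : (T - (T - n.+1).+1)%N = n); last by rewrite -E subKn // ltnW.
rewrite take_oversize ?sh //.
rewrite /Ew Alg; first last.
- by move=> w; apply: JauxN; rewrite leq_subr.
- by move=> w; apply: HL.
- by apply: sum_neq_ninfty => i; apply: HL.
- by have [_ []] := HS n.+1 nT.
- exact: Spos n nT.
rewrite big_seq [RHS]big_seq; apply: eq_bigr => w ws.
rewrite hprob_rcons sh big_ord_recr /=; congr (_ * (_ + _)).
congr (_ + _).
  apply: eq_bigr => i _.
  rewrite traj_rcons ?sh ?(ltnW (ltn_ord i)) //.
  rewrite -cats1 takel_cat ?sh ?(ltnW (ltn_ord i)) // cats1.
  by rewrite nth_rcons sh ltn_ord.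
rewrite traj_rcons ?sh // -cats1 take_size_cat // cats1.
by rewrite nth_rcons sh ltnn eqxx.
Qed.

Lemma Gsum_all n : (n <= T)%N -> Gsum n = Gsum 0.
Proof.
elim: n => [|n IH] nT //.
by rewrite Gsum_S // IH // ltnW.
Qed.

Lemma Jcost_Jaux : Jcost T f L K S pi x0 phi p = Jaux T [::].
Proof. by rewrite -Gsum_T Gsum_all // Gsum_0. Qed.


Lemma Jaux_ge k h : (k <= T)%N -> size h = (T - k)%N ->
  Vf (T - k)%N (tr h (T - k)%N) p <= Jaux k h.
Proof.
elim: k h => [|k IH] h kT sh.
  by rewrite subn0 VT /=.
have nT : (T - k.+1 < T)%N by rewrite ltn_subrL; apply/andP; split => //; apply: leq_ltn_trans kT.
have E : (T - k = (T - k.+1).+1)%N by rewrite subnSK.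
set n := (T - k.+1)%N in nT E sh *.
rewrite /= -/n take_oversize ?sh //.
apply: (@le_trans _ _ (Qf n (tr h n) (phi n h) p)).
  by rewrite VE //; apply: ereal_inf_lbound; exists (phi n h).
rewrite /Q /Ew; apply: Esum_le; first exact: Spos n nT.
move=> w ws; apply: leeD => //.
have := IH (rcons h w) (ltnW kT); rewrite size_rcons sh E => /(_ erefl).
by rewrite -sh traj_rcons_succ.
Qed.

End Traj.

Section Opt.
Variables (x0 : X) (p : P).

Definition mu n x := xget 0%R [set u | Vf n x p = Qf n x u p].

Fixpoint to n (g : seq W) : X :=
  match n with
  | 0 => x0
  | n'.+1 => f n' (to n' g) (mu n' (to n' g)) (nth 0%R g n')
  end.

Definition phiopt : policy R nu nw := fun n g => mu n (to n g).

Lemma to_take n m g : (n <= m)%N -> to n (take m g) = to n g.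
Proof.
elim: n => [|n IH] nm //=.
by rewrite IH ?(ltnW nm) // nth_take.
Qed.

Lemma traj_opt g n : traj f x0 phiopt g n = to n g.
Proof.
elim: n => [|n IH] //=.
by rewrite IH /phiopt (to_take n n g).
Qed.

Lemma mu_spec n x : (n < T)%N -> Vf n x p = Qf n x (mu n x) p.
Proof.
move=> nT; rewrite /mu; case: xgetP => // H.
by have [u Hu] := argmin n nT x p; exfalso; apply: (H u).
Qed.

Lemma Jaux_opt k h : (k <= T)%N -> size h = (T - k)%N ->
  Jaux x0 phiopt p k h = Vf (T - k)%N (to (T - k)%N h) p.
Proof.
elim: k h => [|k IH] h kT sh.
  by rewrite subn0 VT /= traj_opt.
have nT : (T - k.+1 < T)%N by rewrite ltn_subrL; apply/andP; split => //; apply: leq_ltn_trans kT.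
have E : (T - k = (T - k.+1).+1)%N by rewrite subnSK.
set n := (T - k.+1)%N in nT E sh *.
rewrite /= -/n traj_opt /phiopt to_take // (mu_spec n (to n h) nT).
rewrite /Q /Ew; apply: eq_bigr => w _; congr (_ * (_ + _)).
rewrite IH ?(ltnW kT) ?size_rcons ?sh ?E //.
rewrite /= -(to_take n n (rcons h w)) // -cats1 take_size_cat // cats1.
by rewrite nth_rcons sh ltnn eqxx.
Qed.

End Opt.

Lemma Phi_V0 x0 p : Phi T f L K S pi x0 p = Vf 0 x0 p.
Proof.
apply/eqP; rewrite eq_le; apply/andP; split.
  apply: (@le_trans _ _ (Jcost T f L K S pi x0 (phiopt x0 p) p)).
    by apply: ereal_inf_lbound; exists (phiopt x0 p).
  by rewrite Jcost_Jaux Jaux_opt // subnn.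
apply: le_ereal_inf_tmp => _ [phi _ <-].
rewrite Jcost_Jaux; have := Jaux_ge x0 phi p T [::] (leqnn T).
by rewrite subnn => /(_ erefl).
Qed.


Lemma fwd_dom x0 p0 : Vf 0 x0 p0 < +oo -> forall t, (t <= T)%N -> exists y, Vf t y p0 < +oo.
Proof.
move=> V0 t; elim: t => [|t IH] tT; first by exists x0.
have [y Vy] := IH (ltnW tT).
have [u Hu] := argmin t tT y p0.
have [w0 w0S] := Sne t tT.
rewrite Hu in Vy.
have := (Qlt t y u p0 tT (VN_all t.+1 tT)).1 Vy w0 w0S.
by move=> [_ Vlt]; exists (f t y u w0).
Qed.

Section ThetaSec.
Variable Pset : set P.
Hypothesis HLT : forall t w, (t < T)%N -> w \in S t.+1 ->
  ThetaK_class Pset (fun z p => L t z.1 z.2 w p).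
Hypothesis HKT : Theta_class Pset K.

Definition Dom t := forall y p, Vf t y p < +oo -> Pset p /\ forall q, Pset q -> Vf t y q < +oo.
Definition Diff t := forall y p q, Vf t y p < +oo -> interior Pset q ->
  differentiable (fun r => fine (Vf t y r)) q.

Lemma L_dom t w x u p : (t < T)%N -> w \in S t.+1 -> L t x u w p < +oo ->
  Pset p /\ forall q, Pset q -> L t x u w q < +oo.
Proof.
move=> tT ws; have [HT _] := HLT t w tT ws.
exact: (Theta_dom _ _ HT (x, u) p).
Qed.

Lemma L_diff t w x u p q : (t < T)%N -> w \in S t.+1 -> L t x u w p < +oo ->
  interior Pset q -> differentiable (fun r => fine (L t x u w r)) q.
Proof.
move=> tT ws; have [HT _] := HLT t w tT ws.
exact: (Theta_diff _ _ HT (x, u) p q).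
Qed.

Lemma Dom_step t : (t < T)%N -> Dom t.+1 -> Dom t.
Proof.
move=> tT D1 y p Vlt.
have VN1 := VN_all t.+1 tT.
have [u Hu] := argmin t tT y p.
rewrite Hu in Vlt.
have H := (Qlt t y u p tT VN1).1 Vlt.
have [w0 w0S] := Sne t tT.
split; first by have [Ll _] := H w0 w0S; exact: (L_dom t w0 y u p tT w0S Ll).1.
move=> q Pq.
rewrite VE //; apply: (le_lt_trans (ereal_inf_lbound _)); first by exists u.
apply/(Qlt t y u q tT VN1) => w ws; have [Ll Vl] := H w ws; split.
- exact: (L_dom t w y u p tT ws Ll).2.
- exact: (D1 _ _ Vl).2.
Qed.

Lemma Dom_all t : (t <= T)%N -> Dom t.
Proof.
move=> tT; rewrite -(subKn tT).
elim: (T - t)%N (leq_subr t T) => [|k IH] kT.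
  by rewrite subn0 /Dom VT; exact: Theta_dom.
have kT' : (T - k.+1 < T)%N by rewrite ltn_subrL; apply/andP; split => //; apply: leq_ltn_trans kT.
apply: Dom_step => //.
by rewrite subnSK //; apply: IH; apply: ltnW.
Qed.


Lemma comb_self (z : P) (l : R) : (l *: z + (1 - l) *: z = z)%R.
Proof. by rewrite -scalerDl [(l + _)%R]addrC subrK scale1r. Qed.

Lemma comb_selfX (z : X) (l : R) : (l *: z + (1 - l) *: z = z)%R.
Proof. by rewrite -scalerDl [(l + _)%R]addrC subrK scale1r. Qed.

Lemma deriv_step t : (t < T)%N -> Diff t.+1 -> forall x u q, interior Pset q ->
  Vf t x q = Qf t x u q -> Qf t x u q < +oo ->
  differentiable (fun r => fine (Vf t x r)) q /\
  forall h, 'd (fun r => fine (Vf t x r)) q h =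
    Ew_real S pi t.+1 (fun w => 'd (fun r => fine (L t x u w r)) q h
                               + 'd (fun r => fine (Vf t.+1 (f t x u w) r)) q h)%R.
Proof.
move=> tT D1 x u q iq Vq Qq.
have VN1 := VN_all t.+1 tT.
have VN0 := VN_all t (ltnW tT).
have H := (Qlt t x u q tT VN1).1 Qq.
have Pq : Pset q := nbhs_singleton iq.
have Dm1 := Dom_all t.+1 tT.
have Dm := Dom_all t (ltnW tT).
have Lr : forall w r, w \in S t.+1 -> Pset r -> L t x u w r \is a fin_num.
  move=> w r ws Pr; rewrite fin_numE HL /= -ltey.
  have [Ll _] := H w ws; exact: (L_dom t w x u q tT ws Ll).2 r Pr.
have Vr : forall w r, w \in S t.+1 -> Pset r -> Vf t.+1 (f t x u w) r \is a fin_num.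
  move=> w r ws Pr; rewrite fin_numE VN1 /= -ltey.
  have [_ Vl] := H w ws; exact: (Dm1 _ _ Vl).2 r Pr.
pose FL := fun w r => fine (L t x u w r).
pose FV := fun w r => fine (Vf t.+1 (f t x u w) r).
pose F := fun w => (FL w + FV w)%R.
have Fd : forall w, w \in S t.+1 -> differentiable (F w) q.
  move=> w ws; have [Ll Vl] := H w ws.
  apply: differentiableD.
  - exact: (L_diff t w x u q q tT ws Ll iq).
  - exact: (D1 _ _ _ Vl iq).
have [Hd Hdf] := diff_sum_seq _ (S t.+1) (pi t.+1) F q Fd.
set H' := fun r => (\sum_(w <- S t.+1) pi t.+1 w * F w r)%R in Hd Hdf.
have Hfin : forall r, Pset r -> Qf t x u r = (H' r)%:E.
  move=> r Pr; rewrite /Q /Ew Esum_fin; last first.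
    by move=> w ws; rewrite fin_numD Lr // Vr.
  congr EFin; rewrite big_seq [RHS]big_seq; apply: eq_bigr => w ws.
  by rewrite fineD ?Lr ?Vr.
have Vfin : forall r, Pset r -> Vf t x r \is a fin_num.
  move=> r Pr; rewrite fin_numE VN0 /= -ltey.
  have Vlt : Vf t x q < +oo by rewrite Vq.
  exact: (Dm _ _ Vlt).2 r Pr.
have h1 : forall r, Pset r -> (fine (Vf t x r) <= H' r)%R.
  move=> r Pr /=.
  have Vle : Vf t x r <= Qf t x u r.
    by rewrite VE //; apply: ereal_inf_lbound; exists u.
  rewrite Hfin // -(fineK (Vfin r Pr)) lee_fin in Vle.
  exact: Vle.
have h2 : fine (Vf t x q) = H' q by rewrite Vq Hfin.
have h3 : forall v, Pset (q + v)%R -> Pset (q - v)%R ->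
    (2 * fine (Vf t x q) <= fine (Vf t x (q + v)%R) + fine (Vf t x (q - v)%R))%R.
  move=> v Pv Pmv /=.
  have [_ [_ Vc]] := Gamma_all t (ltnW tT).
  have k2 : (0 < 1 / 2 :> R)%R by [].
  have k2' : (1 / 2 < 1 :> R)%R by rewrite ltr_pdivrMr // mul1r ltr1n.
  have := Vc x x (q + v)%R (q - v)%R (1 / 2)%R k2 k2'.
  have Eq : ((1 / 2) *: (q + v) + (1 - 1 / 2) *: (q - v) = q :> P)%R.
    apply/rowP => j; rewrite !mxE; lra.
  rewrite comb_selfX Eq.
  rewrite -(fineK (Vfin _ Pq)) -(fineK (Vfin _ Pv)) -(fineK (Vfin _ Pmv)).
  rewrite -!EFinM -EFinD lee_fin => hh.
  exact: (mid_aux hh).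
have [dg dgE] := squeeze_diff (fun r => fine (Vf t x r)) H' q Pset iq Hd h1 h2 h3.
split => // h.
have := congr1 (fun G => G h) dgE => /= ->.
rewrite Hdf /Ew_real big_seq [RHS]big_seq; apply: eq_bigr => w ws.
have [Ll Vl] := H w ws.
by rewrite diffD //; [exact: (L_diff t w x u q q tT ws Ll iq) | exact: (D1 _ _ _ Vl iq)].
Qed.


Lemma Diff_step t : (t < T)%N -> Diff t.+1 -> Diff t.
Proof.
move=> tT D1 y p q Vlt iq.
have Pq : Pset q := nbhs_singleton iq.
have Vq : Vf t y q < +oo := (Dom_all t (ltnW tT) _ _ Vlt).2 q Pq.
have [u Hu] := argmin t tT y q.
have Qq : Qf t y u q < +oo by rewrite -Hu.
exact: (deriv_step t tT D1 y u q iq Hu Qq).1.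
Qed.

Lemma Diff_all t : (t <= T)%N -> Diff t.
Proof.
move=> tT; rewrite -(subKn tT).
elim: (T - t)%N (leq_subr t T) => [|k IH] kT.
  by rewrite subn0 /Diff VT; exact: Theta_diff.
have kT' : (T - k.+1 < T)%N by rewrite ltn_subrL; apply/andP; split => //; apply: leq_ltn_trans kT.
apply: Diff_step => //.
by rewrite subnSK //; apply: IH; apply: ltnW.
Qed.

Lemma Theta_all t : (t <= T)%N -> Theta_class Pset (Vf t).
Proof.
move=> tT; apply: Theta_of; [exact: Gamma_all | exact: Dom_all | exact: Diff_all].
Qed.

End ThetaSec.

Lemma Ustar_eq t x p u : (t < T)%N -> Ustar T f L K S pi t x p u -> Vf t x p = Qf t x u p.
Proof.
move=> tT Hu; rewrite VE //; apply/eqP; rewrite eq_le; apply/andP; split.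
  by apply: ereal_inf_lbound; exists u.
by apply: le_ereal_inf_tmp => _ [v _ <-]; exact: Hu v.
Qed.

Lemma main_res (x0 : X) (Pad : set P) :
  (exists p, Pad p /\ (Phi T f L K S pi x0 p < +oo)%E) ->
  (forall t, (t <= T)%N ->
     proper_fun (V T f L K S pi t) /\ Gamma_class (V T f L K S pi t)) /\
  (forall Pset : set 'rV[R]_np,
     (forall t w, (t < T)%N -> w \in S t.+1 ->
        ThetaK_class Pset (fun z p => L t z.1 z.2 w p)) ->
     Theta_class Pset K ->
     ((forall t, (t <= T)%N -> Theta_class Pset (V T f L K S pi t)) /\
      (forall p, interior Pset p ->
        (forall x, (V T f L K S pi T x p < +oo)%E ->
           forall h, 'd (fun q => fine (V T f L K S pi T x q)) p h
                     = 'd (fun q => fine (K x q)) p h) /\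
        (forall t, (t < T)%N -> forall x,
           (V T f L K S pi t x p < +oo)%E ->
           forall u, Ustar T f L K S pi t x p u ->
           forall h, 'd (fun q => fine (V T f L K S pi t x q)) p h
             = Ew_real S pi t.+1 (fun w =>
                 'd (fun q => fine (L t x u w q)) p h
                 + 'd (fun q => fine (V T f L K S pi t.+1 (f t x u w) q)) p h)%R))) /\
     (forall Pad' : set 'rV[R]_np, Pad' `<=` Pset -> closed Pad' ->
        convex_subset Pad' ->
        (forall p, Pad' p -> Phi T f L K S pi x0 p \is a fin_num) /\
        (forall p1 p2 (l : R), Pad' p1 -> Pad' p2 -> (0 < l)%R -> (l < 1)%R ->
           (Phi T f L K S pi x0 (l *: p1 + (1 - l) *: p2)%R
             <= l%:E * Phi T f L K S pi x0 p1
                + (1 - l)%:E * Phi T f L K S pi x0 p2)%E) /\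
        (forall p, interior Pset p ->
           differentiable (fun q => fine (Phi T f L K S pi x0 q)) p))).
Proof.
move=> [p1 [Pp1 Phi1]]; rewrite Phi_V0 in Phi1.
split.
  move=> t tT; split; last exact: Gamma_all.
  split; first exact: VN_all.
  by have [y Hy] := fwd_dom x0 p1 Phi1 t tT; exists y, p1.
move=> Pset HLT HKT; split.
  split; first by move=> t tT; exact: Theta_all.
  move=> p ip; split.
    by move=> x _ h; rewrite VT.
  move=> t tT x Vlt u Hu h.
  have E := Ustar_eq t x p u tT Hu.
  have Qq : Qf t x u p < +oo by rewrite -E.
  exact: ((deriv_step Pset HLT HKT t tT (Diff_all Pset HLT HKT t.+1 tT) x u p ip E Qq).2 h).
move=> Pad' sub _ _.
have x0dom := (Dom_all Pset HLT HKT 0 (leq0n T) x0 p1 Phi1).2.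
split; [|split].
- move=> p Pp; rewrite Phi_V0 fin_numE VN_all //= -ltey.
  exact: x0dom p (sub p Pp).
- move=> q1 q2 l _ _ l0 l1; rewrite !Phi_V0.
  have [_ [_ Vc]] := Gamma_all 0 (leq0n T).
  by have := Vc x0 x0 q1 q2 l l0 l1; rewrite comb_selfX.
- move=> p ip.
  have -> : (fun q => fine (Phi T f L K S pi x0 q)) = fun q => fine (Vf 0 x0 q).
    by apply: funext => q; rewrite Phi_V0.
  exact: (Diff_all Pset HLT HKT 0 (leq0n T) x0 p1 p Phi1 ip).
Qed.

End Main.




Local Close Scope ereal_scope.

Theorem theorem2 (R : realType) (nx nu nw np T : nat)
  (f : nat -> 'rV[R]_nx -> 'rV[R]_nu -> 'rV[R]_nw -> 'rV[R]_nx)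
  (L : nat -> 'rV[R]_nx -> 'rV[R]_nu -> 'rV[R]_nw -> 'rV[R]_np -> \bar R)
  (K : 'rV[R]_nx -> 'rV[R]_np -> \bar R)
  (x0 : 'rV[R]_nx) (Pad : set 'rV[R]_np)
  (S : nat -> seq 'rV[R]_nw) (pi : nat -> 'rV[R]_nw -> R) :
  (* stage costs and final cost take values in ]-oo,+oo] *)
  (forall t x u w p, L t x u w p != -oo%E) ->
  (forall x p, K x p != -oo%E) ->
  (* (A1) independent noises W_1..W_T with finite supports *)
  (forall t, (1 <= t <= T)%N -> finite_support_law S pi t) ->
  (* (A2)(i) feasibility *)
  (exists p, Pad p /\ (Phi T f L K S pi x0 p < +oo)%E) ->
  (* (A2)(ii) affine dynamics *)
  (forall t, (t < T)%N -> affine_dyn (f t)) ->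
  (* (A2)(iii) *)
  (forall t w, (t < T)%N -> w \in S t.+1 ->
     GammaK_class (fun z p => L t z.1 z.2 w p)) ->
  (* (A2)(iv) *)
  Gamma_class K ->
  (* conclusion 1: V_0..V_T proper and in Gamma[X,P] *)
  (forall t, (t <= T)%N ->
     proper_fun (V T f L K S pi t) /\ Gamma_class (V T f L K S pi t)) /\
  (forall Pset : set 'rV[R]_np,
     (* (A3) *)
     (forall t w, (t < T)%N -> w \in S t.+1 ->
        ThetaK_class Pset (fun z p => L t z.1 z.2 w p)) ->
     Theta_class Pset K ->
     (* (a) *)
     ((forall t, (t <= T)%N -> Theta_class Pset (V T f L K S pi t)) /\
      (forall p, interior Pset p ->
        (forall x, (V T f L K S pi T x p < +oo)%E ->
           forall h, 'd (fun q => fine (V T f L K S pi T x q)) p h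
                     = 'd (fun q => fine (K x q)) p h) /\
        (forall t, (t < T)%N -> forall x,
           (V T f L K S pi t x p < +oo)%E ->
           forall u, Ustar T f L K S pi t x p u ->
           forall h, 'd (fun q => fine (V T f L K S pi t x q)) p h
             = Ew_real S pi t.+1 (fun w =>
                 'd (fun q => fine (L t x u w q)) p h
                 + 'd (fun q => fine (V T f L K S pi t.+1 (f t x u w) q)) p h)))) /\
     (* (b) *)
     (forall Pad' : set 'rV[R]_np, Pad' `<=` Pset -> closed Pad' ->
        convex_subset Pad' ->
        (forall p, Pad' p -> Phi T f L K S pi x0 p \is a fin_num) /\
        (forall p1 p2 (l : R), Pad' p1 -> Pad' p2 -> 0 < l -> l < 1 ->
           (Phi T f L K S pi x0 (l *: p1 + (1 - l) *: p2)%R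
             <= l%:E * Phi T f L K S pi x0 p1
                + (1 - l)%:E * Phi T f L K S pi x0 p2)%E) /\
        (forall p, interior Pset p ->
           differentiable (fun q => fine (Phi T f L K S pi x0 q)) p))).
Proof.
move=> HL HK HS feas Hf HLG HKG.
exact: (main_res R nx nu nw np T f L K S pi HL HK HS Hf HLG HKG x0 Pad feas).
Qed.
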